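(* Let $\omega\in(0,1)$ and let $\alpha=(\alpha_m)$, $\beta=(\beta_m)$ be non-negative non-increasing null sequences with $\alpha_1,\beta_1\le1$. Then there is $C>0$ with $\alpha_m\le C\beta_m$ for all $m$ if and only if there exists a positive integer $r$ such that $\widetilde K^{(\omega)}_n(\alpha)\le\widetilde K^{(\omega)}_{n+r}(\beta)$ for every $n\in\mathbb N\cup\{0\}$.
   Context: For a non-negative non-increasing null sequence $\gamma$ and $n\ge0$: $K^{(\omega)}_n(\gamma)=|\{m:\omega^{n+1}<\gamma_m\le\omega^n\}|$ and $\widetilde K^{(\omega)}_n(\gamma)=\sum_{i=0}^nK^{(\omega)}_i(\gamma)$. *)

(* Defs.v *)
From HB Require Import structures.
From mathcomp Require Import all_boot all_order all_algebra.
From mathcomp Require Import all_classical all_reals all_analysis.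
From mathcomp Require Import finmap.
Set Implicit Arguments. Unset Strict Implicit. Unset Printing Implicit Defensive.
Import Order.TTheory GRing.Theory Num.Theory numFieldNormedType.Exports.
Local Open Scope ring_scope.
Local Open Scope classical_set_scope.
Local Open Scope fset_scope.

(* gamma is a non-negative, non-increasing null sequence (indexed from 0). *)
Definition nonneg_noninc_null (R : realType) (gamma : nat -> R) : Prop :=
  (forall m, 0 <= gamma m) /\
  (forall m n, (m <= n)%N -> gamma n <= gamma m) /\
  (gamma @ \oo --> 0).

(* K^(omega)_n(gamma) = |{m : omega^(n+1) < gamma_m <= omega^n}|
   (the set is finite for a null sequence, so fset_set is its true finite set) *)
Definition Kom (R : realType) (omega : R) (n : nat) (gamma : nat -> R) : nat :=
  #|` fset_set [set m : nat | omega ^+ n.+1 < gamma m <= omega ^+ n] |.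

Definition Ktil (R : realType) (omega : R) (n : nat) (gamma : nat -> R) : nat :=
  (\sum_(0 <= i < n.+1) Kom omega i gamma)%N.

(* Main.v *)
Require Import Defs.
From HB Require Import structures.
From mathcomp Require Import all_boot all_order all_algebra.
From mathcomp Require Import all_classical all_reals all_analysis.
From mathcomp Require Import finmap.
Import Order.TTheory GRing.Theory Num.Theory.
Local Open Scope ring_scope.
Local Open Scope classical_set_scope.

Section Sec.
Context {R : realType}.

Lemma near_lt (g : nat -> R) t : g @ \oo --> 0 -> 0 < t ->
  exists N, forall m, (N <= m)%N -> g m < t.
Proof.
move=> g0 t0; have := cvgr_lt 0 g0 t t0 => -[N _ HN]; exists N => m Nm; exact: HN.
Qed.

Lemma cardII n : #|` fset_set (`I_n : set nat)| = n.
Proof. by apply: card_fset_set; apply: card_eqxx. Qed.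

Definition S (g : nat -> R) t := [set m : nat | t < g m].

Lemma finS g t : g @ \oo --> 0 -> 0 < t -> finite_set (S g t).
Proof.
move=> g0 t0; have [N HN] := @near_lt g t g0 t0.
apply: (@sub_finite_set _ _ `I_N); last exact: finite_II.
move=> m /= tm; rewrite ltnNge; apply/negP => /HN; rewrite ltNge (ltW tm) //.
Qed.

Lemma downS g t m k : (forall m n, (m <= n)%N -> g n <= g m) ->
  S g t m -> (k <= m)%N -> S g t k.
Proof. by move=> gd /= tm km; apply: lt_le_trans tm (gd _ _ km). Qed.

Lemma keyS g1 g2 t1 t2 m :
  (forall m n, (m <= n)%N -> g1 n <= g1 m) ->
  (forall m n, (m <= n)%N -> g2 n <= g2 m) ->
  finite_set (S g1 t1) -> finite_set (S g2 t2) ->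
  (#|` fset_set (S g1 t1)| <= #|` fset_set (S g2 t2)|)%N ->
  S g1 t1 m -> S g2 t2 m.
Proof.
move=> d1 d2 f1 f2 le Sm; apply/not_notP => nS.
have h1 : (m.+1 <= #|` fset_set (S g1 t1)|)%N.
  rewrite -{1}(cardII m.+1); apply: fsubset_leq_card.
  rewrite -fset_set_sub ?finite_II //.
  move=> k /= km; exact: (@downS g1 t1 m k d1 Sm km).
have h2 : (#|` fset_set (S g2 t2)| <= m)%N.
  rewrite -(cardII m); apply: fsubset_leq_card.
  rewrite -fset_set_sub ?finite_II //.
  move=> k /= Sk; rewrite ltnNge; apply/negP => mk; exact: nS (@downS g2 t2 k m d2 Sk mk).
have := leq_trans h1 (leq_trans le h2); by rewrite ltnn.
Qed.

Lemma KtilE (w : R) g n : 0 < w < 1 -> nonneg_noninc_null g -> g 0%N <= 1 ->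
  Ktil w n g = #|` fset_set (S g (w ^+ n.+1))|.
Proof.
move=> /andP[w0 w1] [g0 [gd gc]] g1.
have gle1 m : g m <= 1 by apply: le_trans g1; apply: gd.
have fin k : finite_set (S g (w ^+ k.+1)) by apply: finS => //; exact: exprn_gt0.
elim: n => [|n IH].
  rewrite /Ktil big_nat1 /Kom; congr (#|` fset_set _|).
  by apply/seteqP; split => m /=; rewrite ?expr0 ?gle1 ?andbT.
rewrite /Ktil big_nat_recr //= -/(Ktil w n g) IH /Kom.
set A := S g _; set B := [set m | _].
have fB : finite_set B.
  apply: (sub_finite_set _ (fin n.+1)) => m /= /andP[] //.
have -> : S g (w ^+ n.+2) = A `|` B.
  apply/seteqP; split => m /=.
    by move=> h; case: (leP (g m) (w ^+ n.+1)) => hh; [right; apply/andP; split | left].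
  case => [h|/andP[] //]; apply: le_lt_trans h.
  by rewrite exprS ler_piMl ?exprn_ge0 ?ltW.
have fA : finite_set A by exact: fin.
rewrite fset_setU //; symmetry; apply: etrans (cardfsU _ _) _; rewrite -fset_setI //.
have -> : A `&` B = set0.
  apply/seteqP; split => m //= [h /andP[_ h']]; have hh : w ^+ n.+1 < g m := h; by move: (lt_le_trans hh h'); rewrite ltxx.
by rewrite fset_set0 cardfs0 subn0.
Qed.

Lemma powlt (w : R) t : 0 < w < 1 -> 0 < t -> exists N, forall k, (N <= k)%N -> w ^+ k < t.
Proof.
move=> /andP[w0 w1] t0; apply: (@near_lt (GRing.exp w) t) => //.
by apply: cvg_expr; rewrite gtr0_norm.
Qed.

End Sec.

Theorem lemma2p6 (R : realType) (omega : R) (alpha beta : nat -> R) :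
  0 < omega < 1 ->
  nonneg_noninc_null alpha -> nonneg_noninc_null beta ->
  alpha 0%N <= 1 -> beta 0%N <= 1 ->
  (exists C : R, 0 < C /\ forall m : nat, alpha m <= C * beta m) <->
  (exists r : nat, (0 < r)%N /\
     forall n : nat, (Ktil omega n alpha <= Ktil omega (n + r) beta)%N).
Proof.
move=> w01 ha hb a1 b1.
have /andP[w0 w1] := w01.
have [a0 [ad ac]] := ha; have [b0 [bd bc]] := hb.
have fa k : finite_set (S alpha (omega ^+ k.+1)) by apply: finS => //; exact: exprn_gt0.
have fb k : finite_set (S beta (omega ^+ k.+1)) by apply: finS => //; exact: exprn_gt0.
split.
- move=> [C [C0 HC]].
  have Ci : 0 < C^-1 by rewrite invr_gt0.
  have [N HN] := powlt omega C^-1 w01 Ci.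
  exists N.+1; split => // n.
  rewrite !KtilE //; apply: fsubset_leq_card; rewrite -fset_set_sub //.
  move=> m /= am.
  have ltr : omega ^+ N.+1 < C^-1 by apply: HN.
  rewrite -addSn exprD.
  apply: le_lt_trans (_ : omega ^+ n.+1 * C^-1 < beta m).
    by rewrite ler_wpM2l ?exprn_ge0 ?ltW.
  apply: lt_le_trans (_ : alpha m * C^-1 <= beta m).
    by rewrite ltr_pM2r ?invr_gt0.
  apply: le_trans (_ : C * beta m * C^-1 <= beta m).
    by apply: ler_wpM2r; [rewrite invr_ge0 ltW | exact: HC].
  by rewrite mulrAC mulfV ?gt_eqF ?mul1r.
- move=> [r [r0 H]].
  exists (omega ^+ r.+1)^-1; split; first by rewrite invr_gt0 exprn_gt0.
  move=> m.
  have [am0|am0] := eqVneq (alpha m) 0.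
    by rewrite am0 mulr_ge0 // invr_ge0 exprn_ge0 // ltW.
  have apos : 0 < alpha m by rewrite lt0r am0 a0.
  have exP : exists n, omega ^+ n.+1 < alpha m.
    by have [N HN] := powlt omega (alpha m) w01 apos; exists N; apply: HN.
  case: (ex_minnP exP) => n Pn nmin.
  have aw : alpha m <= omega ^+ n.
    case: n Pn nmin => [|k] Pn nmin.
      by rewrite expr0; apply: le_trans a1; apply: ad.
    rewrite leNgt; apply/negP => /nmin; by rewrite ltnn.
  have Sb : S beta (omega ^+ (n + r).+1) m.
    apply: (@keyS _ alpha beta (omega ^+ n.+1)) => //.
    by rewrite -!KtilE.
  apply: (le_trans aw).
  have Sb' : omega ^+ (n + r).+1 < beta m := Sb.
  apply: le_trans (_ : (omega ^+ r.+1)^-1 * omega ^+ (n + r).+1 <= _).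
    by rewrite -addnS exprD mulrCA mulVf ?mulr1 // gt_eqF // exprn_gt0.
  by rewrite ler_wpM2l ?invr_ge0 ?exprn_ge0 ?ltW.
Qed.
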